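(* Let $\alpha>0$. Then at least one of the following two statements fails: (A) $\delta_{\min,1}^{(\alpha)}(N)\le \frac{1}{N\log N}$ for infinitely many integers $N$; (B) $\delta_{\min,2}^{(\alpha)}(N)\ge \frac{1}{N(\log N)^{2/3}}$ for all sufficiently large integers $N$.
   Context: For $\alpha>0$, let $0<\lambda_1<\lambda_2<\cdots$ be the distinct values of $\alpha m^2+n^2$ with integers $m,n\ge1$, listed in increasing order. For $N\ge 3$ and $k\ge1$, let $\delta_{\min,k}^{(\alpha)}(N)$ be the $k$-th smallest among the gaps $\lambda_{i+1}-\lambda_i$, $1\le i<N$ (counted with multiplicity); in particular $\delta_{\min,1}^{(\alpha)}(N)=\min\{\lambda_{i+1}-\lambda_i:1\le i<N\}$. (Statements (A) and (B) are the properties that a Poisson random sequence satisfies almost surely.) *)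

(* Defs.v *)
From mathcomp Require Import all_boot all_order all_algebra.
From mathcomp Require Import reals exp.
Set Implicit Arguments. Unset Strict Implicit. Unset Printing Implicit Defensive.
Import Order.TTheory GRing.Theory Num.Theory.
Local Open Scope ring_scope.

Definition is_value (R : realType) (alpha x : R) : Prop :=
  exists m n : nat, (1 <= m)%N /\ (1 <= n)%N /\
    x = alpha * (m%:R) ^+ 2 + (n%:R) ^+ 2.

(* lam is the increasing enumeration of the DISTINCT values:
   lam 0 = lambda_1, lam 1 = lambda_2, ... (0-indexed: lam i = lambda_{i+1}). *)
Definition is_value_enum (R : realType) (alpha : R) (lam : nat -> R) : Prop :=
  (forall i, lam i < lam i.+1) /\
  (forall x, (exists i, lam i = x) <-> is_value alpha x).

(* The gaps lambda_{i+1} - lambda_i, 1 <= i < N, as a sequence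
   (in the 0-indexed lam: lam i.+1 - lam i for 0 <= i < N-1). *)
Definition gaps (R : realType) (lam : nat -> R) (N : nat) : seq R :=
  [seq lam i.+1 - lam i | i <- iota 0 N.-1].

(* k-th smallest gap (counted with multiplicity), k >= 1. *)
Definition delta_min (R : realType) (lam : nat -> R) (k N : nat) : R :=
  nth 0 (sort <=%O (gaps lam N)) k.-1.

(* Main.v *)
Require Import Defs.
From mathcomp Require Import all_boot all_order all_algebra.
From mathcomp Require Import reals exp.
From mathcomp Require Import zify ring lra.
From Stdlib Require Import ClassicalEpsilon.
Import Order.TTheory GRing.Theory Num.Theory.
Local Open Scope ring_scope.

Lemma dm1_mem (R : realType) (lam : nat -> R) N :
  (2 <= N)%N -> delta_min lam 1 N \in gaps lam N.
Proof.
move=> HN; rewrite /delta_min /= -(mem_sort <=%O); apply: mem_nth.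
rewrite size_sort /gaps size_map size_iota; lia.
Qed.

Lemma dm2_le (R : realType) (lam : nat -> R) N (c : R) i j :
  i != j -> (i < N.-1)%N -> (j < N.-1)%N ->
  lam i.+1 - lam i <= c -> lam j.+1 - lam j <= c -> delta_min lam 2 N <= c.
Proof.
move=> hij hi hj ci cj; rewrite /delta_min /=.
apply: nth_count_le; first by apply: sort_sorted; exact: le_total.
rewrite count_sort /gaps count_map.
have H2 : (2 <= count (pred2 i j) (iota 0 N.-1))%N.
  have := count_predUI (pred1 i) (pred1 j) (iota 0 N.-1).
  rewrite !count_uniq_mem ?iota_uniq // !mem_iota /= hi hj.
  have -> : count (predI (pred1 i) (pred1 j)) (iota 0 N.-1) = 0%N.
    apply/eqP; rewrite -leqn0 leqNgt -has_count; apply/hasP => -[x _] /= /andP[/eqP -> /eqP]. 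
    by move/eqP: hij.
  have -> : count (predU (pred1 i) (pred1 j)) (iota 0 N.-1) = count (pred2 i j) (iota 0 N.-1) by [].
  lia.
apply: leq_trans H2 _; apply: sub_count => x /= /orP[] /eqP -> //.
Qed.

Section Count.
Variables (R : realType) (alpha : R) (lam : nat -> R).
Hypothesis Ha : 0 < alpha.
Hypothesis Hinc : forall i, lam i < lam i.+1.
Hypothesis Henum : forall x, (exists i, lam i = x) <-> is_value alpha x.

Lemma lam_lt i j : (i < j)%N -> lam i < lam j.
Proof. by apply: (homo_ltn (r := fun x y : R => x < y)) => // y x z; exact: lt_trans. Qed.

Lemma lam_le_inv i j : lam i <= lam j -> (i <= j)%N.
Proof. by move=> h; rewrite leqNgt; apply/negP => /lam_lt; rewrite ltNge h. Qed.

Lemma lam_inj i j : lam i = lam j -> i = j.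
Proof. by move=> h; apply/eqP; rewrite eqn_leq !lam_le_inv // h. Qed.

Definition val2 (p : nat * nat) : R := alpha * (p.1%:R) ^+ 2 + (p.2%:R) ^+ 2.

Lemma val2_mono a b a' b' : (a <= a')%N -> (b <= b')%N -> val2 (a, b) <= val2 (a', b').
Proof.
move=> h1 h2; rewrite /val2 /=; apply: lerD; last by rewrite lerXn2r ?nnegrE ?ler_nat.
by rewrite ler_pM2l // lerXn2r ?nnegrE ?ler_nat.
Qed.

Lemma count_up (Y : R) (A B k : nat) :
  Y < alpha * (A.+1)%:R ^+ 2 -> Y < (B.+1)%:R ^+ 2 -> lam k <= Y -> (k.+1 <= A * B)%N.
Proof.
move=> hA hB hk.
pose P l (p : nat * nat) := (1 <= p.1)%N /\ (1 <= p.2)%N /\ lam l = val2 p.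
have gP l : P l (epsilon (inhabits (0%N, 0%N)) (P l)).
  apply: epsilon_spec.
  have [H _] := Henum (lam l).
  by have [m [n [h1 [h2 h3]]]] := H (ex_intro _ l erefl); exists (m, n).
pose g l := epsilon (inhabits (0%N, 0%N)) (P l).
have -> : k.+1 = size (map g (iota 0 k.+1)) by rewrite size_map size_iota.
have -> : (A * B)%N = size [seq (x, y) | x <- iota 1 A, y <- iota 1 B].
  by rewrite size_allpairs !size_iota.
apply: uniq_leq_size.
  rewrite map_inj_in_uniq ?iota_uniq // => l l' _ _ e.
  apply: lam_inj; have [_ [_ ->]] := gP l; have [_ [_ ->]] := gP l'.
  by rewrite /g in e *; rewrite e.
move=> p /mapP[l]; rewrite mem_iota add0n => hl ->.
have [h1 [h2 h3]] := gP l.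
have hl' : lam l <= Y.
  apply: le_trans hk; have : (l <= k)%N by lia.
  by rewrite leq_eqVlt => /orP[/eqP->|/lam_lt/ltW].
apply/allpairsP; exists (g l); rewrite !mem_iota /=; split; last by case: (g l).
- apply/andP; split => //; rewrite -ltnS add1n; apply: contraTT hA; rewrite -!leqNgt -leNgt => h.
  apply: le_trans hl'; rewrite h3 /val2 /= -[X in X <= _]addr0; apply: lerD; last by rewrite sqr_ge0.
  by rewrite ler_pM2l // lerXn2r ?nnegrE ?ler_nat // -ltnS.
- apply/andP; split => //; rewrite -ltnS add1n; apply: contraTT hB; rewrite -!leqNgt -leNgt => h.
  apply: le_trans hl'; rewrite h3 /val2 /= -[X in X <= _]add0r; apply: lerD.
    exact: mulr_ge0 (ltW Ha) (sqr_ge0 _).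
  by rewrite lerXn2r ?nnegrE ?ler_nat // -ltnS.
Qed.

Hypothesis Hirr : forall a b a' b' : nat, val2 (a, b) = val2 (a', b') -> a = a'.

Lemma val2_inj p q : val2 p = val2 q -> p = q.
Proof.
case: p q => a b [a' b'] e; have ea := Hirr _ _ _ _ e; subst a'.
move: e; rewrite /val2 /= => /addrI /eqP; rewrite -!natrX eqr_nat eqn_exp2r // => /eqP -> //.
Qed.

Lemma count_low (U V k : nat) : val2 (U, V) <= lam k -> (U * V <= k.+1)%N.
Proof.
move=> hk.
pose P (p : nat * nat) i := lam i = val2 p.
pose idx p := epsilon (inhabits 0%N) (P p).
have idxP p : (1 <= p.1)%N -> (1 <= p.2)%N -> lam (idx p) = val2 p.
  move=> h1 h2; apply: (epsilon_spec (inhabits 0%N) (P p)).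
  have [_ H] := Henum (val2 p); apply: H.
  by exists p.1, p.2.
have -> : k.+1 = size (iota 0 k.+1) by rewrite size_iota.
have -> : (U * V)%N = size [seq idx (x, y) | x <- iota 1 U, y <- iota 1 V].
  by rewrite size_allpairs !size_iota.
have mem_st p : p \in [seq (x, y) | x <- iota 1 U, y <- iota 1 V] ->
   [/\ (1 <= p.1 <= U)%N & (1 <= p.2 <= V)%N].
  move=> /allpairsP[[x y] [/=]]; rewrite !mem_iota => h1 h2 -> /=; split; lia.
apply: uniq_leq_size.
  apply: allpairs_uniq; rewrite ?iota_uniq // => -[a b] [c d] /mem_st[p1 p2] /mem_st[q1 q2] /= e.
  move: p1 p2 q1 q2 => /= p1 p2 q1 q2.
  apply: val2_inj; rewrite -(idxP (a, b)) /=; try lia. rewrite e idxP //=; lia.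
 
move=> z /allpairsP[[x y] [h1 h2 ->]]; rewrite mem_iota add0n ltnS; move: h1 h2; rewrite !mem_iota /= => h1 h2.
apply: lam_le_inv; rewrite idxP /=; try lia.
apply: le_trans hk; apply: val2_mono; lia.
Qed.

End Count.
Arguments val2 {R}.

Lemma final_ineq (R : realType) (N : nat) :
  (25 <= N)%N -> (200 : R) ^+ 3 <= ln (N%:R : R) ->
  100 * (ln ((25 * N)%N%:R : R)) `^ (2 / 3) < ln (N%:R : R).
Proof.
move=> h25 hL; set L := ln (N%:R : R).
have hN : (0 : R) < N%:R by rewrite ltr0n; lia.
have h25L : ln (25 : R) <= L.
  by rewrite /L ler_ln ?posrE // ?ler_nat // (ltr0n R 25).
have e : ln ((25 * N)%N%:R : R) = ln 25 + L.
  by rewrite natrM /L lnM ?posrE ?(ltr0n R 25).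
have l25 : 0 < ln (25 : R) by apply: ln_gt0; rewrite (ltr1n R 25).
have hle : ln ((25 * N)%N%:R : R) `^ (2 / 3) <= (2 * L) `^ (2 / 3).
  apply: ge0_ler_powR; rewrite ?nnegrE; try lra.
set s := (2 * L) `^ (3^-1).
have s0 : 0 <= s by apply: powR_ge0.
have s3 : s ^+ 3 = 2 * L.
  have n3 : (3:R) != 0 by rewrite pnatr_eq0.
  have l0 : 0 <= 2 * L by lra.
  by rewrite -powR_mulrn // /s -powRrM mulVf // powRr1.
have s2 : (2 * L) `^ (2 / 3) = s ^+ 2.
  by rewrite -powR_mulrn // /s -powRrM [3^-1 * _]mulrC.
have sbig : 200 < s.
  rewrite ltNge; apply/negP => hs.
  have : s ^+ 3 <= 200 ^+ 3 by rewrite lerXn2r ?nnegrE //.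
  rewrite s3 => h; have e8 : (0:R) < 200 ^+ 3 by rewrite exprn_gt0.
  have hL2 : (200:R) ^+ 3 <= L by exact: hL.
  lra.
apply: (le_lt_trans (y := 100 * s ^+ 2)); first by rewrite -s2 ler_pM2l //.
have : 2 * L = s * s ^+ 2 by rewrite -s3 exprS.
have : 0 < s ^+ 2 by rewrite exprn_gt0 //; lra.
nra.
Qed.

Lemma gap_rat (R : realType) (alpha : R) (lam : nat -> R)
  (Hinc : forall i, lam i < lam i.+1)
  (Henum : forall x, (exists i, lam i = x) <-> is_value alpha x)
  a b a' b' : (a' < a)%N -> val2 alpha (a, b) = val2 alpha (a', b') ->
  exists Q : nat, (0 < Q)%N /\ forall k, 1 / Q%:R <= lam k.+1 - lam k.
Proof.
move=> ha e; exists (a ^ 2 - a' ^ 2)%N; split; first by rewrite subn_gt0 ltn_exp2r.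
set Q := (a ^ 2 - a' ^ 2)%N.
have hQ : Q%:R * alpha = (b' ^ 2)%:R - (b ^ 2)%:R.
  rewrite /Q natrB ?leq_exp2r ?(ltnW ha) // !natrX mulrBl.
  move: e; rewrite /val2 /= [alpha * _]mulrC [alpha * (a'%:R ^+ 2)]mulrC; lra.
move=> k.
have vk l : exists p : nat * nat, lam l = val2 alpha p.
  have [H _] := Henum (lam l).
  by have [m [n [_ [_ h]]]] := H (ex_intro _ l erefl); exists (m, n).
have [[p1 p2] ep] := vk k; have [[q1 q2] eq] := vk k.+1.
set z : int := ((b' ^ 2)%:Z - (b ^ 2)%:Z) * ((q1 ^ 2)%:Z - (p1 ^ 2)%:Z)
               + Q%:Z * ((q2 ^ 2)%:Z - (p2 ^ 2)%:Z).
have ez : Q%:R * (lam k.+1 - lam k) = z%:~R.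
  rewrite /z intrD !intrM !intrB -!pmulrn -hQ ep eq /val2 /= !natrX; ring.
have Q0 : (0 : R) < Q%:R by rewrite ltr0n /Q subn_gt0 ltn_exp2r.
have g0 : 0 < lam k.+1 - lam k by rewrite subr_gt0.
have : (0 : R) < z%:~R by rewrite -ez mulr_gt0.
rewrite ltr0z => z0.
have : (1 : R) <= z%:~R by rewrite ler1z.
rewrite -ez => h1.
by rewrite ler_pdivrMr // mulrC.
Qed.

Lemma nsq (n : nat) : (0 < n)%N -> (n <= n ^ 2)%N.
Proof. nia. Qed.
Lemma nsq1 (n : nat) : (n <= n.+1 ^ 2)%N.
Proof. nia. Qed.

Section Main.
Variables (R : realType) (alpha : R) (lam : nat -> R).
Hypothesis Ha : 0 < alpha.
Hypothesis Hinc : forall i, lam i < lam i.+1.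
Hypothesis Henum : forall x, (exists i, lam i = x) <-> is_value alpha x.

Lemma lam_leW i j : (i <= j)%N -> lam i <= lam j.
Proof. by rewrite leq_eqVlt => /orP[/eqP->|/(@lam_lt R lam Hinc _ _)/ltW]. Qed.

Lemma vk l : exists p : nat * nat, [/\ (1 <= p.1)%N, (1 <= p.2)%N & lam l = val2 alpha p].
Proof.
have [H _] := Henum (lam l).
by have [m [n [h1 [h2 h]]]] := H (ex_intro _ l erefl); exists (m, n).
Qed.

Lemma idx_of p : (1 <= p.1)%N -> (1 <= p.2)%N -> exists j, lam j = val2 alpha p.
Proof. by move=> h1 h2; have [_ H] := Henum (val2 alpha p); apply: H; exists p.1, p.2. Qed.

Lemma dm1_gap N : (2 <= N)%N -> exists i, (i < N.-1)%N /\ delta_min lam 1 N = lam i.+1 - lam i.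
Proof.
move=> h; have := @dm1_mem R lam N h; rewrite /gaps => /mapP[i]; rewrite mem_iota add0n => hi ->.
by exists i.
Qed.

Lemma rat_contra (Q : nat) : (0 < Q)%N -> (forall k, 1 / Q%:R <= lam k.+1 - lam k) ->
  (forall M : nat, exists N : nat, (M <= N)%N /\ (3 <= N)%N /\
         delta_min lam 1 N <= 1 / (N%:R * ln (N%:R : R))) -> False.
Proof.
move=> Q0 HQ HA.
have l3 : 0 < ln (3 : R) by apply: ln_gt0; rewrite (ltr1n R 3).
have [N [hM [h3 hd]]] := HA (Num.Def.archi_bound (Q%:R / ln (3 : R))).
have qP : (0 : R) < Q%:R by rewrite ltr0n.
have hb := archi_boundP (ltW (divr_gt0 qP l3)).
have hNM : (Num.Def.archi_bound (Q%:R / ln (3 : R)))%:R <= (N%:R : R) by rewrite ler_nat.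
have [i [hi e]] := dm1_gap N (ltnW h3).
have := HQ i; rewrite -e => hq; have := le_trans hq hd.
have nP : (0 : R) < N%:R by rewrite ltr0n; lia.
have lN : ln (3 : R) <= ln (N%:R : R) by rewrite ler_ln ?posrE ?ler_nat // (ltr0n R 3).
rewrite !div1r lef_pV2 ?posrE ?mulr_gt0 //; last lra.
have : Q%:R < N%:R * ln (3 : R) by rewrite -ltr_pdivrMr //; apply: lt_le_trans hb hNM.
move=> h1 h2; have : N%:R * ln (3 : R) <= N%:R * ln (N%:R : R) by rewrite ler_pM2l.
lra.
Qed.


Lemma step (f : nat -> R) (c : R) : f 0%N <= c -> forall n, c < f n ->
  exists U, f U <= c /\ c < f U.+1.
Proof.
move=> h0; elim=> [|n IH] h; first by move: h; rewrite ltNge h0.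
case: (leP (f n) c) => hn; first by exists n.
exact: IH.
Qed.

Hypothesis Hirr : forall a b a' b' : nat, val2 alpha (a, b) = val2 alpha (a', b') -> a = a'.

Lemma val2_pos p : (1 <= p.2)%N -> 0 < val2 alpha p.
Proof.
move=> h; rewrite /val2; apply: ltr_wpDl; first by rewrite mulr_ge0 ?sqr_ge0 ?ltW.
by rewrite exprn_gt0 // ltr0n.
Qed.

Lemma val2_scale p : val2 alpha ((2 * p.1)%N, (2 * p.2)%N) = 4 * val2 alpha p.
Proof. by rewrite /val2 /= !natrM; ring. Qed.

Lemma exU (X : R) : 0 < X -> exists U, alpha * U%:R ^+ 2 <= X / 2 /\ X / 2 < alpha * U.+1%:R ^+ 2.
Proof.
move=> XP; have Ha' := Ha.
have b0 : 0 < X / (2 * alpha) by rewrite divr_gt0 ?mulr_gt0.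
have hb := archi_boundP (ltW b0).
apply: (step (fun U => alpha * U%:R ^+ 2) (X / 2) _ (Num.Def.archi_bound (X / (2 * alpha)))); first by rewrite expr0n /= mulr0; lra.
set n := Num.Def.archi_bound _ in hb *; clearbody n.
have hnn : (1 <= n)%N.
  rewrite lt0n; apply/eqP => e0; move: hb; rewrite e0 /=; lra.
have : n%:R <= n%:R ^+ 2 :> R by rewrite -natrX ler_nat nsq.
move: hb; rewrite ltr_pdivrMr ?mulr_gt0 // => hb hn.
have : alpha * n%:R <= alpha * n%:R ^+ 2 by exact: ler_wpM2l (ltW Ha) _ _ hn.
lra.
Qed.

Lemma exV (X : R) : 0 < X -> exists V, V%:R ^+ 2 <= X / 2 /\ X / 2 < V.+1%:R ^+ 2 :> R.
Proof.
move=> XP; have b0 : 0 <= X / 2 by lra.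
have hb := archi_boundP b0.
apply: (step (fun V => V%:R ^+ 2) (X / 2) _ (Num.Def.archi_bound (X / 2))); first by rewrite expr0n /=; lra.
set n := Num.Def.archi_bound _ in hb *; clearbody n.
have hnn : (1 <= n)%N.
  rewrite lt0n; apply/eqP => e0; move: hb; rewrite e0 /=; lra.
have : n%:R <= n%:R ^+ 2 :> R by rewrite -natrX ler_nat nsq.
lra.
Qed.

Lemma count_bound (X : R) (j1 C N i : nat) : 0 < X -> lam j1 = 4 * X ->
  (8 * alpha + 8) / alpha + (8 * alpha + 8) < C%:R -> (C * C <= N)%N ->
  X = lam i.+1 -> (i.+2 <= N)%N -> (j1.+1 <= 25 * N)%N.
Proof.
move=> XP ej1 hC hCN eX hiN; have Ha' := Ha.
have [U [hU1 hU2]] := exU _ XP.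
have [V [hV1 hV2]] := exV _ XP.
case: (boolP ((0 < U)%N && (0 < V)%N)) => [/andP[U0 V0]|hUV].
- have hlow : (U * V <= i.+2)%N.
    apply: (@count_low R alpha lam Ha Hinc Henum Hirr U V i.+1).
    rewrite -eX /val2 /=; lra.
  have hup : (j1.+1 <= (3 * U + 2) * (3 * V + 2))%N.
    apply: (@count_up R alpha lam Ha Hinc Henum (4 * X) _ _ j1); last by rewrite ej1.
    + have -> : (3 * U + 2).+1%:R = 3 * U.+1%:R :> R by rewrite -natrM; congr (_%:R); lia.
      have -> : alpha * (3 * U.+1%:R) ^+ 2 = 9 * (alpha * U.+1%:R ^+ 2) by ring.
      lra.
    + have -> : (3 * V + 2).+1%:R = 3 * V.+1%:R :> R by rewrite -natrM; congr (_%:R); lia.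
      have -> : (3 * V.+1%:R) ^+ 2 = 9 * (V.+1%:R ^+ 2) :> R by ring.
      lra.
  clear -hlow hup hiN U0 V0; nia.
- have hX : 4 * X < 8 * alpha + 8.
    move: hUV; rewrite negb_and -!eqn0Ngt => /orP[/eqP U0|/eqP V0].
    + move: hU2; rewrite U0 /= expr1n mulr1; lra.
    + move: hV2; rewrite V0 /= expr1n; lra.
  have K1 : 0 <= (8 * alpha + 8) / alpha by apply: divr_ge0; lra.
  have hCK1 : 8 * alpha + 8 < alpha * C%:R.
    have : (8 * alpha + 8) / alpha < C%:R by lra.
    by rewrite ltr_pdivrMr // [C%:R * _]mulrC.
  have hCK2 : 8 * alpha + 8 < C%:R by lra.
  have hCC : C%:R <= C.+1%:R ^+ 2 :> R by rewrite -natrX ler_nat nsq1.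
  have hup : (j1.+1 <= C * C)%N.
    apply: (@count_up R alpha lam Ha Hinc Henum (4 * X) _ _ j1); last by rewrite ej1.
    + have : alpha * C%:R <= alpha * C.+1%:R ^+ 2 by exact: ler_wpM2l (ltW Ha) _ _ hCC.
      lra.
    + lra.
  clear -hup hCN; lia.
Qed.

Lemma irr_contra :
  (forall M : nat, exists N : nat, (M <= N)%N /\ (3 <= N)%N /\
         delta_min lam 1 N <= 1 / (N%:R * ln (N%:R : R))) ->
  (exists M : nat, forall N : nat, (M <= N)%N -> (3 <= N)%N ->
         1 / (N%:R * (ln (N%:R : R)) `^ (2 / 3)) <= delta_min lam 2 N) -> False.
Proof.
move=> HA [MB HB]; have Ha' := Ha.
set K := (8 * alpha + 8) / alpha + (8 * alpha + 8).
have K8 : 0 <= 8 * alpha + 8 by lra.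
have K1 : 0 <= (8 * alpha + 8) / alpha by apply: divr_ge0 K8 (ltW Ha).
have K0 : 0 <= K by rewrite /K; lra.
set C := Num.Def.archi_bound K.
have hC := archi_boundP K0; rewrite -/C /K in hC; clearbody C; clear K0 K1 K8; clear K.
set T : R := 200 ^+ 3.
have T0 : 0 <= sequences.expR T by apply: ltW; apply: expR_gt0.
set N0 := Num.Def.archi_bound (sequences.expR T).
have hN0 := archi_boundP T0; rewrite -/N0 in hN0.
have [N [hM [h3 hd]]] := HA (maxn (maxn 25 MB) (maxn (C * C) N0)).
have h25 : (25 <= N)%N by lia.
have hMB : (MB <= N)%N by lia.
have hCN : (C * C <= N)%N by lia.
have hN0N : (N0 <= N)%N by lia.
have nP : (0 : R) < N%:R by rewrite ltr0n; lia.
have hL : T <= ln (N%:R : R).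
  rewrite -[T]expRK ler_ln ?posrE ?expR_gt0 //.
  by apply: (le_trans (ltW hN0)); rewrite ler_nat.
have hfin := @final_ineq R N h25 hL.
clear hL hN0 hN0N T0 hM; clear N0 T.
have LP : 0 < ln (N%:R : R).
  apply: ln_gt0; rewrite (ltr1n R N); lia.
have [i [hi e]] := dm1_gap N (ltnW h3).
set X := lam i.+1; set Y := lam i.
have hdel : X - Y <= 1 / (N%:R * ln (N%:R : R)) by rewrite -e.
have dP : 0 < X - Y by rewrite subr_gt0 Hinc.
have [[m0 n0] [hm0 hn0 eY]] := vk i.
have [[m1 n1] [hm1 hn1 eX]] := vk i.+1.
rewrite -/Y in eY; rewrite -/X in eX.
have YP : 0 < Y by rewrite eY val2_pos.
have XP : 0 < X by rewrite eX val2_pos.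
have [j0 ej0] : exists j, lam j = 4 * Y.
  by rewrite eY -val2_scale; apply: idx_of; rewrite /= muln_gt0 ?hm0 ?hn0.
have [j1 ej1] : exists j, lam j = 4 * X.
  by rewrite eX -val2_scale; apply: idx_of; rewrite /= muln_gt0 ?hm1 ?hn1.
have hj01 : (j0 < j1)%N.
  rewrite ltnNge; apply/negP => /lam_leW; rewrite ej0 ej1; lra.
have hj0i : i != j0.
  by apply/eqP => hij; move: ej0; rewrite -hij -/Y; lra.
have g0 : lam j0.+1 - lam j0 <= 4 * (X - Y).
  have hh := lam_leW _ _ hj01; rewrite ej1 in hh; rewrite ej0; lra.
have gi : lam i.+1 - lam i <= 4 * (X - Y) by rewrite -/X -/Y; lra.
have hiN : (i.+2 <= N)%N by clear -hi h3; lia.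
have hj1 := count_bound _ _ _ _ i XP ej1 hC hCN erefl hiN.
have hdm : delta_min lam 2 (25 * N) <= 4 * (X - Y).
  apply: (@dm2_le R lam (25 * N) (4 * (X - Y)) i j0 hj0i) => //.
  - by clear -hi h3; lia.
  - by clear -hj01 hj1; lia.
have hB := HB (25 * N)%N ltac:(clear -hMB; lia) ltac:(clear -h25; lia).
set L := ln (N%:R : R) in LP hdel hfin.
set p := ln ((25 * N)%N%:R : R) `^ (2 / 3) in hB hfin.
have pP : 0 < p.
  rewrite /p; apply: powR_gt0; apply: ln_gt0; rewrite (ltr1n R (25 * N)); clear -h25; lia.
clearbody p L.
have h4 : 4 * (X - Y) <= 4 * (1 / (N%:R * L)) by apply: ler_wpM2l _ _ _ hdel.
have hh := le_trans hB (le_trans hdm h4).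
move: hh; rewrite natrM !div1r.
have e4 : 4 * (N%:R * L)^-1 = (N%:R * L / 4)^-1 by rewrite invf_div.
rewrite e4 lef_pV2 ?posrE; last by rewrite divr_gt0 ?mulr_gt0.
  by move=> h; nra.
by rewrite !mulr_gt0.
Qed.

End Main.

Theorem theorem1p4 (R : realType) (alpha : R) (lam : nat -> R) :
  0 < alpha -> is_value_enum alpha lam ->
  ~ ( (* (A) *)
      (forall M : nat, exists N : nat, (M <= N)%N /\ (3 <= N)%N /\
         delta_min lam 1 N <= 1 / (N%:R * ln (N%:R : R)))
      /\
      (* (B) *)
      (exists M : nat, forall N : nat, (M <= N)%N -> (3 <= N)%N ->
         1 / (N%:R * (ln (N%:R : R)) `^ (2 / 3)) <= delta_min lam 2 N) ).
Proof.
move=> Ha [Hinc Henum] [HA HB].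
have Hirr : forall a b a' b' : nat, val2 alpha (a, b) = val2 alpha (a', b') -> a = a'.
  move=> a b a' b' e; case: (ltngtP a a') => // h; exfalso.
  - have [Q [Q0 HQ]] := @gap_rat R alpha lam Hinc Henum _ _ _ _ h (esym e).
    exact: (@rat_contra R alpha lam Ha Q Q0 HQ HA).
  - have [Q [Q0 HQ]] := @gap_rat R alpha lam Hinc Henum _ _ _ _ h e.
    exact: (@rat_contra R alpha lam Ha Q Q0 HQ HA).
exact: (@irr_contra R alpha lam Ha Hinc Henum Hirr HA HB).
Qed.
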